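(* Let $n\ge4$ be even. The set of words $\tau\in\mathcal{A}_n^{\mathbb{N}}$ that are not injective is $\nu_n$-null.
   Context: Let $\mathcal{A}_n=\{1,\dots,5n-6\}$, $\mathcal{A}_n^m$ words of length $m$, $\mathcal{A}_n^*$ all finite words, $\mathcal{A}_n^{\mathbb{N}}$ infinite words; for a word $\tau$, $\tau(m)$ is its prefix of length $m$. $\nu_n$ is the probability measure on $\mathcal{A}_n^{\mathbb{N}}$ (on the $\sigma$-algebra generated by cylinders) with $\nu_n(\{\tau:\tau(|w|)=w\})=(5n-6)^{-|w|}$ for all $w\in\mathcal{A}_n^*$. Define maps $\psi^1_{n,j},\psi^2_{n,j}:\mathbb{R}^2\to\mathbb{R}^2$, $j\in\mathcal{A}_n$, each of the form $x\mapsto\frac1nx+b$: for $j=1,\dots,4n-4$, $\psi^1_{n,j}=\psi^2_{n,j}$ map $[0,1]^2$ onto the $4n-4$ squares of the grid of $n^2$ closed squares of side $1/n$ in $[0,1]^2$ meeting $\partial[0,1]^2$; for $j=4n-3+i$, $i=0,\dots,\frac n2-2$, $\psi^1_{n,j}(x)=\psi^2_{n,j}(x)=\frac1nx+(\frac12+\frac in,\frac1n)$; for $j=4n+\frac n2-4+i$, $i=0,\dots,\frac n2-2$, $\psi^1_{n,j}(x)=\frac1nx+(\frac{i+1}n,\frac2n)$, $\psi^2_{n,j}(x)=\frac1nx+(\frac{i+1}n,\frac1n)$. A choice function is any $\eta:\mathcal{A}_n^*\to\{1,2\}$; $\phi^\eta_\varepsilon=\mathrm{id}$, $\phi^\eta_w=\psi^{\eta(\varepsilon)}_{n,i_1}\circ\psi^{\eta(i_1)}_{n,i_2}\circ\cdots\circ\psi^{\eta(i_1\cdots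 i_{m-1})}_{n,i_m}$ for $w=i_1\cdots i_m$; $K^\eta=\bigcap_{m\ge0}\bigcup_{w\in\mathcal{A}_n^m}\phi^\eta_w([0,1]^2)$; $\pi_\eta:\mathcal{A}_n^{\mathbb{N}}\to K^\eta$, $\pi_\eta(\tau)=\lim_{m\to\infty}\phi^\eta_{\tau(m)}(\mathbf{0})$. A word $\tau$ is injective if for every choice function $\eta$, $\pi_\eta^{-1}(\{\pi_\eta(\tau)\})=\{\tau\}$. *)

(* Defs.v *)
From HB Require Import structures.
From mathcomp Require Import all_boot all_order all_algebra.
From mathcomp Require Import all_classical all_reals all_analysis.
Set Implicit Arguments. Unset Strict Implicit. Unset Printing Implicit Defensive.
Import Order.TTheory GRing.Theory Num.Theory.
Import numFieldNormedType.Exports.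
Local Open Scope classical_set_scope.
Local Open Scope ring_scope.

(* Alphabet A_n = {1,...,5n-6}.  The letter j is represented by the ordinal
   i : 'I_(5n-6).-1.+1 with j = i+1 (for n >= 4, (5n-6).-1.+1 = 5n-6). *)
Definition alph (n : nat) : finType := 'I_(5 * n - 6).-1.+1.

Definition iword (n : nat) := nat -> alph n.
HB.instance Definition _ (n : nat) := isPointed.Build (alph n) ord0.

Definition prefix {n : nat} (tau : iword n) (m : nat) : seq (alph n) := mkseq tau m.

Definition cylinder {n : nat} (w : seq (alph n)) : set (iword n) :=
  [set tau | prefix tau (size w) = w].

Definition cylinders (n : nat) : set (set (iword n)) :=
  [set C | exists w : seq (alph n), C = cylinder w].

Definition wordspace (n : nat) := g_sigma_algebraType (@cylinders n).

Section Geometry.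
Variable R : realType.

(* the (lower-left) grid cell (a,b) of the k-th boundary square, k = j-1,
   k = 0..4n-5, enumerating the 4n-4 squares of the n x n grid meeting the
   boundary of [0,1]^2 (bottom row, top row, left column, right column) *)
Definition boundary_cell (n k : nat) : nat * nat :=
  (if k < n then (k, 0)
  else if k < 2 * n then (k - n, n.-1)
  else if k < 3 * n - 2 then (0, k - 2 * n + 1)
  else (n.-1, k - (3 * n - 2) + 1))%N.

(* translation vector b of psi^c_{n,j}; c = false stands for the superscript 1,
   c = true for the superscript 2 *)
Definition psi_offset (n : nat) (c : bool) (j : nat) : R * R :=
  if (j <= 4 * n - 4)%N then
    let ab := boundary_cell n (j.-1) in ((ab.1)%:R / n%:R, (ab.2)%:R / n%:R)
  else if (j <= 4 * n + n./2 - 5)%N then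
    let i := (j - (4 * n - 3))%N in (2^-1 + i%:R / n%:R, 1 / n%:R)
  else
    let i := (j - (4 * n + n./2 - 4))%N in
    ((i.+1)%N%:R / n%:R, (if c then 1 else 2)%:R / n%:R).

Definition psi (n : nat) (c : bool) (j : nat) (x : R * R) : R * R :=
  (x.1 / n%:R + (psi_offset n c j).1, x.2 / n%:R + (psi_offset n c j).2).

(* choice functions eta : A_n^* -> {1,2}, encoded with bool (false = 1, true = 2) *)
Definition choice_fun (n : nat) := seq (alph n) -> bool.

(* phi^eta_w = psi^{eta(eps)}_{i1} o psi^{eta(i1)}_{i2} o ... o psi^{eta(i1..i_{m-1})}_{im} *)
Fixpoint phi {n : nat} (eta : choice_fun n) (w : seq (alph n)) (x : R * R) : R * R :=
  match w with
  | [::] => x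
  | i :: w' => psi n (eta [::]) (i.+1)%N (phi (fun u => eta (i :: u)) w' x)
  end.

(* pi_eta(tau) = lim_m phi^eta_{tau(m)}(0); the limit in R^2 is taken
   coordinatewise (the sequence converges, so this is the usual limit) *)
Definition coding {n : nat} (eta : choice_fun n) (tau : iword n) : R * R :=
  (limn (fun m => (phi eta (prefix tau m) (0, 0)).1),
   limn (fun m => (phi eta (prefix tau m) (0, 0)).2)).

Definition injective_word {n : nat} (tau : iword n) : Prop :=
  forall eta : choice_fun n,
    (@coding n eta) @^-1` [set coding eta tau] = [set tau].

End Geometry.

(* Main.v *)
Require Import Defs.
From HB Require Import structures.
From mathcomp Require Import all_boot all_order all_algebra.
From mathcomp Require Import all_classical all_reals all_analysis.
From mathcomp Require Import zify ring lra.
Import Order.TTheory GRing.Theory Num.Theory.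
Import numFieldNormedType.Exports.
Local Open Scope classical_set_scope.
Local Open Scope ring_scope.
Definition cell (n : nat) (c : bool) (j : nat) : nat * nat :=
  (if j <= 4 * n - 4 then boundary_cell n j.-1
  else if j <= 4 * n + n./2 - 5 then (n./2 + (j - (4 * n - 3)), 1)
  else ((j - (4 * n + n./2 - 4)).+1, if c then 1 else 2))%N.

Lemma cell_bound n c j : (4 <= n)%N -> ~~ odd n -> (1 <= j <= 5 * n - 6)%N ->
  ((cell n c j).1 <= n.-1 /\ (cell n c j).2 <= n.-1)%N /\
  ((4 * n - 4 < j)%N -> (1 <= (cell n c j).1 <= n - 2 /\ 1 <= (cell n c j).2 <= n - 2)%N).
Proof.
move=> n4 ev /andP[j1 jN].
have [h nh] : exists h, n = (h + h)%N by exists n./2; rewrite addnn (even_halfK ev) //.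
subst n. rewrite /cell /boundary_cell.
have -> : ((h + h)./2 = h)%N by rewrite addnn doubleK.
case: ifP => H1; [case: ifP => H2; [|case: ifP => H3; [|case: ifP => H4]]|case: ifP => H2] => /=; case: c; lia.
Qed.

Lemma cell_inj n c j j' : (4 <= n)%N -> ~~ odd n -> (1 <= j <= 5 * n - 6)%N ->
  (1 <= j' <= 5 * n - 6)%N -> cell n c j = cell n c j' -> j = j'.
Proof.
move=> n4 ev /andP[j1 jN] /andP[j1' jN'] E.
have E1 := f_equal fst E; have E2 := f_equal snd E; move: E1 E2 {E}.
have [h nh] : exists h, n = (h + h)%N by exists n./2; rewrite addnn (even_halfK ev) //.
subst n. rewrite /cell /boundary_cell.
have -> : ((h + h)./2 = h)%N by rewrite addnn doubleK.
case: c; repeat (case: ifP => ?); rewrite /=; lia.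
Qed.
Section Real.
Variable R : realType.

Lemma natle {a b : nat} : (a <= b)%N -> (a%:R <= b%:R :> R).
Proof. by rewrite ler_nat. Qed.

Lemma coordB (n p : nat) (z : R) : (0 < n)%N -> 0 <= z <= 1 -> (p + 1 <= n)%N ->
  ((z + p%:R) / n%:R = 0 \/ (z + p%:R) / n%:R = 1) -> z = 0 \/ z = 1.
Proof.
move=> n0 /andP[z0 z1] pn.
have nR : 0 < n%:R :> R by rewrite ltr0n.
have := natle pn; rewrite natrD => pn'.
have p0 : 0 <= p%:R :> R by [].
move=> [] /eqP; rewrite ?mulf_eq0 ?invr_eq0 ?(gt_eqF nR) ?orbF => /eqP H.
- left; lra.
- move: H; rewrite -[X in _ = X](divff (lt0r_neq0 nR)) => /(mulIf (invr_neq0 (lt0r_neq0 nR))) H.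
  right; lra.
Qed.

Lemma coordNB (n p : nat) (z : R) : 0 <= z <= 1 -> (1 <= p)%N -> (p + 2 <= n)%N ->
  (z + p%:R) / n%:R <> 0 /\ (z + p%:R) / n%:R <> 1.
Proof.
move=> /andP[z0 z1] p1 pn.
have n0 : (0 < n)%N by lia.
have nR : 0 < n%:R :> R by rewrite ltr0n.
have := natle pn; rewrite natrD => pn'.
have := natle p1 => p1'.
split=> /eqP; rewrite ?mulf_eq0 ?invr_eq0 ?(gt_eqF nR) ?orbF => /eqP H.
- lra.
- move: H; rewrite -[X in _ = X](divff (lt0r_neq0 nR)) => /(mulIf (invr_neq0 (lt0r_neq0 nR))) H.
  lra.
Qed.

Lemma coord01 (n p : nat) (z : R) : (0 < n)%N -> 0 <= z <= 1 -> (p + 1 <= n)%N ->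
  0 <= (z + p%:R) / n%:R <= 1.
Proof.
move=> n0 /andP[z0 z1] pn.
have nR : 0 < n%:R :> R by rewrite ltr0n.
have := natle pn; rewrite natrD => pn'.
have p0 : 0 <= p%:R :> R by [].
apply/andP; split; first by apply: divr_ge0; lra.
rewrite ler_pdivrMr //; lra.
Qed.

Lemma coordC (n p p' : nat) (y y' : R) : (0 < n)%N -> 0 <= y <= 1 -> 0 <= y' <= 1 ->
  p != p' -> (y + p%:R) / n%:R = (y' + p'%:R) / n%:R -> y = 0 \/ y = 1.
Proof.
move=> n0 /andP[y0 y1] /andP[y0' y1'] pp.
have nR : 0 < n%:R :> R by rewrite ltr0n.
move=> /(mulIf (invr_neq0 (lt0r_neq0 nR))) H.
have [lt|lt] : (p + 1 <= p')%N \/ (p' + 1 <= p)%N by lia.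
- have := natle lt; rewrite natrD => h; right; lra.
- have := natle lt; rewrite natrD => h; left; lra.
Qed.

End Real.
Lemma psi_cell (R : realType) n c j (z : R * R) : (0 < n)%N -> ~~ odd n ->
  psi n c j z = ((z.1 + (cell n c j).1%:R) / n%:R, (z.2 + (cell n c j).2%:R) / n%:R).
Proof.
move=> n0 ev.
have nR : (n%:R : R) != 0 by rewrite pnatr_eq0 -lt0n.
rewrite /psi /psi_offset /cell.
case: ifP => _; first by rewrite /= !mulrDl.
case: ifP => _ /=; last by rewrite !mulrDl.
rewrite !mulrDl; congr pair; congr (_ + _).
rewrite natrD mulrDl; congr (_ + _).
have [h nh] : exists h, n = (h + h)%N by exists n./2; rewrite addnn (even_halfK ev) //.
subst n; rewrite addnn doubleK -addnn natrD; rewrite natrD in nR.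
have hR : (h%:R : R) != 0 by apply: contra nR => /eqP ->; rewrite addr0.
field.
by rewrite -natrD pnatr_eq0 addnn double_eq0 -(pnatr_eq0 R).
Qed.

Definition shift {n} (tau : iword n) : iword n := fun k => tau k.+1.
Definition etaS {n} (eta : choice_fun n) (a : alph n) : choice_fun n :=
  fun u => eta (a :: u).

Lemma prefixS n (tau : iword n) m : Defs.prefix tau m.+1 = tau 0%N :: Defs.prefix (shift tau) m.
Proof.
rewrite /Defs.prefix /mkseq /=; congr (_ :: _); rewrite (iotaDl 1 0) -map_comp.
by apply: eq_map => k /=; rewrite add1n.
Qed.

Section Lim.
Variables (R : realType) (n : nat).
Hypotheses (n4 : (4 <= n)%N) (ev : ~~ odd n).

Definition sq (eta : choice_fun n) (tau : iword n) m : R * R :=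
  phi eta (Defs.prefix tau m) (0, 0).

Lemma sqS eta tau m : sq eta tau m.+1 =
  psi n (eta [::]) (tau 0%N).+1 (sq (etaS eta (tau 0%N)) (shift tau) m).
Proof. by rewrite /sq prefixS. Qed.

Definition in01 (x : R * R) := 0 <= x.1 <= 1 /\ 0 <= x.2 <= 1.

Lemma letter_range (a : alph n) : (1 <= a.+1 <= 5 * n - 6)%N.
Proof. have := ltn_ord a; rewrite /=; lia. Qed.

Lemma n0 : (0 < n)%N. Proof. lia. Qed.

Lemma cellx_le c (a : alph n) : ((cell n c a.+1).1 + 1 <= n)%N.
Proof. have [[h _] _] := cell_bound n c a.+1 n4 ev (letter_range a); lia. Qed.
Lemma celly_le c (a : alph n) : ((cell n c a.+1).2 + 1 <= n)%N.
Proof. have [[_ h] _] := cell_bound n c a.+1 n4 ev (letter_range a); lia. Qed.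

Lemma psi_in01 c (a : alph n) z : in01 z -> in01 (psi n c a.+1 z).
Proof.
move=> [z1 z2]; rewrite psi_cell //; last exact: n0.
split; apply: coord01 => //; [exact: n0|exact: cellx_le|exact: n0|exact: celly_le].
Qed.

Lemma sq_in01 m : forall eta tau, in01 (sq eta tau m).
Proof.
elim: m => [|m IH] eta tau; first by rewrite /in01 /= !lexx ler01.
by rewrite sqS; apply: psi_in01.
Qed.

Lemma sq_mono m : forall eta tau,
  (sq eta tau m).1 <= (sq eta tau m.+1).1 /\ (sq eta tau m).2 <= (sq eta tau m.+1).2.
Proof.
elim: m => [|m IH] eta tau.
  have [/andP[h1 _] /andP[h2 _]] := sq_in01 1 eta tau; by split.
rewrite [sq _ _ m.+1]sqS [sq _ _ m.+2]sqS !psi_cell //; try exact: n0.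
have [h1 h2] := IH (etaS eta (tau 0%N)) (shift tau).
have nR : 0 <= (n%:R : R)^-1 by rewrite invr_ge0.
by split; apply: ler_wpM2r => //; rewrite lerD2r.
Qed.

Lemma sq_cvg1 eta tau : cvgn (fun m => (sq eta tau m).1).
Proof.
apply: nondecreasing_is_cvgn.
  by apply/nondecreasing_seqP => m; have [] := sq_mono m eta tau.
exists 1 => _ [m _ <-]; by have [/andP[_ ->] _] := sq_in01 m eta tau.
Qed.

Lemma sq_cvg2 eta tau : cvgn (fun m => (sq eta tau m).2).
Proof.
apply: nondecreasing_is_cvgn.
  by apply/nondecreasing_seqP => m; have [] := sq_mono m eta tau.
exists 1 => _ [m _ <-]; by have [_ /andP[_ ->]] := sq_in01 m eta tau.
Qed.

Lemma coding_in01 (eta : choice_fun n) (tau : iword n) : in01 (coding R eta tau).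
Proof.
rewrite /coding /in01 /=; split; apply/andP; split.
- apply: limr_ge; first exact: sq_cvg1.
  by apply: nearW => m; have [/andP[-> _] _] := sq_in01 m eta tau.
- apply: limr_le; first exact: sq_cvg1.
  by apply: nearW => m; have [/andP[_ ->] _] := sq_in01 m eta tau.
- apply: limr_ge; first exact: sq_cvg2.
  by apply: nearW => m; have [_ /andP[-> _]] := sq_in01 m eta tau.
- apply: limr_le; first exact: sq_cvg2.
  by apply: nearW => m; have [_ /andP[_ ->]] := sq_in01 m eta tau.
Qed.

Lemma lim_aff (u : nat -> R) (v : nat -> R) (p : R) :
  cvgn u -> (forall m, v m.+1 = (u m + p) / n%:R) ->
  limn v = (limn u + p) / n%:R.
Proof.
move=> cu hv; apply: cvg_lim => //.
have H : [sequence v m.+1]_m @ \oo --> (limn u + p) / n%:R.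
  have -> : [sequence v m.+1]_m = (fun m => (u m + p) / n%:R) by apply: funext => m; exact: hv.
  apply: cvgMl; apply: cvgD; [exact: cu | exact: cvg_cst].
by move: H; rewrite cvg_shiftS.
Qed.

Lemma coding_rec (eta : choice_fun n) (tau : iword n) : coding R eta tau =
  psi n (eta [::]) (tau 0%N).+1 (coding R (etaS eta (tau 0%N)) (shift tau)).
Proof.
rewrite psi_cell //; last exact: n0.
rewrite /coding /=; congr pair.
- apply: lim_aff; first exact: sq_cvg1.
  move=> m; change ((sq eta tau m.+1).1 = ((sq (etaS eta (tau 0%N)) (shift tau) m).1 + (cell n (eta [::]) (tau 0%N).+1).1%:R) / n%:R).
  by rewrite sqS psi_cell //; exact: n0.
- apply: lim_aff; first exact: sq_cvg2.
  move=> m; change ((sq eta tau m.+1).2 = ((sq (etaS eta (tau 0%N)) (shift tau) m).2 + (cell n (eta [::]) (tau 0%N).+1).2%:R) / n%:R).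
  by rewrite sqS psi_cell //; exact: n0.
Qed.

End Lim.

Section Comb.
Variables (R : realType) (n : nat).
Hypotheses (n4 : (4 <= n)%N) (ev : ~~ odd n).

Definition onB (x : R * R) := x.1 = 0 \/ x.1 = 1 \/ x.2 = 0 \/ x.2 = 1.

Lemma psi_onB c (a : alph n) (z : R * R) : onB (psi n c a.+1 z) -> in01 R z ->
  onB z /\ (a < 4 * n - 4)%N.
Proof.
move=> H [z1 z2]; move: H; rewrite psi_cell //; last exact: (n0 n n4 ev).
rewrite /onB /= => H.
have hx := cellx_le n n4 ev c a; have hy := celly_le n n4 ev c a.
have [_ nb] := cell_bound n c a.+1 n4 ev (letter_range n n4 ev a).
have aB : (a < 4 * n - 4)%N.
  case: (ltnP a (4 * n - 4)) => // ha.
  have [[b1 b2] [b3 b4]] : ((1 <= (cell n c a.+1).1)%N /\ ((cell n c a.+1).1 + 2 <= n)%N) /\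
     ((1 <= (cell n c a.+1).2)%N /\ ((cell n c a.+1).2 + 2 <= n)%N).
    have := nb ltac:(lia); lia.
  have [X1 X2] := coordNB R n _ _ z1 b1 b2.
  have [Y1 Y2] := coordNB R n _ _ z2 b3 b4.
  by case: H => [//|[//|[//|//]]].
split=> //.
have nn := n0 n n4 ev.
case: H => [H|[H|[H|H]]].
- by case: (coordB R n _ _ nn z1 hx (or_introl H)) => ->; [left|right; left].
- by case: (coordB R n _ _ nn z1 hx (or_intror H)) => ->; [left|right; left].
- by case: (coordB R n _ _ nn z2 hy (or_introl H)) => ->; [right; right; left|right; right; right].
- by case: (coordB R n _ _ nn z2 hy (or_intror H)) => ->; [right; right; left|right; right; right].
Qed.

Lemma boundary_all j : forall (eta : choice_fun n) (t : iword n),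
  onB (coding R eta t) -> (t j < 4 * n - 4)%N.
Proof.
elim: j => [|j IH] eta t; rewrite (coding_rec R n n4 ev) => /psi_onB [].
- exact: coding_in01.
- by [].
- exact: coding_in01.
- by move=> /IH.
Qed.

Lemma psi_inj c j (y y' : R * R) : psi n c j y = psi n c j y' -> y = y'.
Proof.
rewrite !psi_cell //; try exact: (n0 n n4 ev).
have nR : (n%:R : R) != 0 by rewrite pnatr_eq0 -lt0n (n0 n n4 ev).
case=> /(mulIf (invr_neq0 nR)) /addIr H1 /(mulIf (invr_neq0 nR)) /addIr H2.
by case: y y' H1 H2 => [? ?] [? ?] /= -> ->.
Qed.

Lemma collide m : forall (eta : choice_fun n) (tau tau' : iword n),
  (forall j, (j < m)%N -> tau j = tau' j) -> tau m != tau' m ->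
  coding R eta tau = coding R eta tau' -> forall j, (m < j)%N -> (tau j < 4 * n - 4)%N.
Proof.
elim: m => [|m IH] eta tau tau' heq hne.
  rewrite (coding_rec R n n4 ev eta tau) (coding_rec R n n4 ev eta tau') !psi_cell //; try exact: (n0 n n4 ev).
  have nR : (n%:R : R) != 0 by rewrite pnatr_eq0 -lt0n (n0 n n4 ev).
  case=> H1 H2 j j0.
  have hc : cell n (eta [::]) (tau 0%N).+1 != cell n (eta [::]) (tau' 0%N).+1.
    apply/eqP => /(cell_inj n _ _ _ n4 ev (letter_range n n4 ev _) (letter_range n n4 ev _)) [] /val_inj.
    by apply/eqP.
  have [y1 y2] := coding_in01 R n n4 ev (etaS eta (tau 0%N)) (shift tau).
  have [y1' y2'] := coding_in01 R n n4 ev (etaS eta (tau' 0%N)) (shift tau').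
  have onb : onB (coding R (etaS eta (tau 0%N)) (shift tau)).
    case E1 : ((cell n (eta [::]) (tau 0%N).+1).1 == (cell n (eta [::]) (tau' 0%N).+1).1).
    + have E2 : (cell n (eta [::]) (tau 0%N).+1).2 != (cell n (eta [::]) (tau' 0%N).+1).2.
        apply: contra hc => /eqP E2; move/eqP: E1.
        by case: (cell _ _ _) (cell _ _ _) E2 => [? ?] [? ?] /= -> ->.
      by case: (coordC R n _ _ _ _ (n0 n n4 ev) y2 y2' E2 H2) => h; [right; right; left|right; right; right].
    + by case: (coordC R n _ _ _ _ (n0 n n4 ev) y1 y1' (negbT E1) H1) => h; [left|right; left].
  by have := boundary_all j.-1 _ _ onb; rewrite /shift (prednK j0).
move=> hc j hj.
have t0 : tau 0%N = tau' 0%N by apply: heq.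
move: hc; rewrite (coding_rec R n n4 ev eta tau) (coding_rec R n n4 ev eta tau') t0 => /psi_inj hc.
have j0 : (0 < j)%N by lia.
have := IH _ (shift tau) (shift tau') _ hne hc j.-1; rewrite /shift (prednK j0).
apply=> [k hk|]; [exact: heq|lia].
Qed.

Lemma noninj (tau : iword n) : ~ @injective_word R n tau ->
  exists k, forall j, (k <= j)%N -> (tau j < 4 * n - 4)%N.
Proof.
move=> H; apply: contrapT => nE; apply: H => eta.
apply/seteqP; split => [x /= Hx|x /= ->//].
apply: contrapT => xne.
have [j hj] : exists j, x j != tau j.
  apply: contrapT => nj; apply: xne; apply: funext => j.
  by apply/eqP; apply: contrapT => hj; apply: nj; exists j; apply/negP.
have ex : exists j, [pred j | tau j != x j] j by exists j; rewrite /= eq_sym.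
case: (ex_minnP ex) => m /= hm minm.
apply: nE; exists m.+1 => i hi.
apply: (collide m eta tau x _ hm (esym Hx) i hi).
move=> k hk; apply/eqP; apply: contraLR hk => hk; rewrite -leqNgt; exact: minm.
Qed.

End Comb.

Section Meas.
Variables (R : realType) (n : nat).
Hypothesis n4 : (4 <= n)%N.
Variable nu : probability (wordspace n) R.
Hypothesis nu_cyl : forall w : seq (alph n),
     nu (cylinder w) = (((5 * n - 6)%:R : R) ^- size w)%:E.

Fixpoint words (L : nat) : seq (seq (alph n)) :=
  if L is L'.+1 then [seq rcons w a | w <- words L', a <- enum (alph n)] else [:: [::]].

Lemma words_size L : all (fun w => size w == L) (words L).
Proof.
elim: L => [|L IH] //=.
apply/allP => w /allpairsP [[u a] [hu _ ->]] /=.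
by rewrite size_rcons eqSS; exact: (allP IH).
Qed.

Lemma words_mem L w : size w = L -> w \in words L.
Proof.
elim: L w => [|L IH] w; first by case: w.
case/lastP: w => [//|u a]; rewrite size_rcons => -[su].
apply/allpairsP; exists (u, a); split => //; [exact: IH | by rewrite mem_enum].
Qed.

Lemma words_uniq L : uniq (words L).
Proof.
elim: L => [|L IH] //=.
apply: allpairs_uniq => //; first exact: enum_uniq.
by move=> [u a] [v b] _ _ /= /rcons_inj [-> ->].
Qed.

Lemma size_words L : size (words L) = ((5 * n - 6) ^ L)%N.
Proof.
elim: L => [|L IH] //=.
rewrite size_allpairs IH size_enum_ord expnS mulnC; congr (_ * _)%N; lia.
Qed.

Definition Sset L (W : seq (seq (alph n))) : set (wordspace n) :=
  [set tau | Defs.prefix tau L \in W].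

Lemma cyl_meas w : measurable (cylinder w : set (wordspace n)).
Proof. by apply: sub_gen_smallest; exists w. Qed.

Lemma Sset_meas L W : all (fun w => size w == L) W -> uniq W ->
  measurable (Sset L W) /\
  nu (Sset L W) = ((size W)%:R * ((5 * n - 6)%:R ^- L))%:E.
Proof.
elim: W => [|w W IH] /=.
  have -> : Sset L [::] = set0 by apply/seteqP; split => x //=.
  by split; [exact: measurable0 | rewrite measure0 mul0r].
move=> /andP[/eqP sw sW] /andP[wW uW]; have [mW nW] := IH sW uW.
have E : Sset L (w :: W) = cylinder w `|` Sset L W.
  apply/seteqP; split => tau; rewrite /Sset /cylinder /= in_cons sw.
    by move=> /orP[/eqP ->|h]; [left|right].
  by case=> [->|->]; rewrite ?eqxx ?orbT.
rewrite E; split; first exact: measurableU (cyl_meas w) mW.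
rewrite measureU //; first last.
- apply/seteqP; split => tau //= [c1 c2]; move: c2 wW.
  by rewrite /Sset /cylinder /= -sw c1 => ->.
- exact: cyl_meas.
change (nu (cylinder w) + nu (Sset L W) = ((size W).+1%:R / (5 * n - 6)%:R ^+ L)%:E).
rewrite nu_cyl nW sw -EFinD; congr (_%:E).
by rewrite mulrSr mulrDl mul1r addrC.
Qed.

Lemma pred_meas L (P : pred (seq (alph n))) :
  measurable [set tau : wordspace n | P (Defs.prefix tau L)] /\
  nu [set tau : wordspace n | P (Defs.prefix tau L)] =
    ((count P (words L))%:R * ((5 * n - 6)%:R ^- L))%:E.
Proof.
have -> : [set tau : wordspace n | P (Defs.prefix tau L)] = Sset L [seq w <- words L | P w].
  apply/seteqP; split => tau; rewrite /Sset /= mem_filter.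
  - by move=> h; rewrite h words_mem // size_mkseq.
  - by case/andP.
rewrite -size_filter; apply: Sset_meas; last exact/filter_uniq/words_uniq.
apply/allP => w; rewrite mem_filter => /andP[_ h]; exact: (allP (words_size L)).
Qed.

Definition QB (a : alph n) := (a < 4 * n - 4)%N.
Definition Pkm k m (w : seq (alph n)) := all (fun j => QB (nth ord0 w j)) (iota k m).

Lemma Pkm_rcons k m w a : size w = (k + m)%N ->
  Pkm k m.+1 (rcons w a) = Pkm k m w && QB a.
Proof.
move=> sw; rewrite /Pkm -[m.+1]addn1 iotaD all_cat /= andbT nth_rcons sw ltnn eqxx.
congr andb; apply: eq_in_all => j; rewrite mem_iota => /andP[_ hj].
by rewrite nth_rcons sw hj.
Qed.

Lemma count_step k m W : all (fun w => size w == (k + m)%N) W ->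
  count (Pkm k m.+1) [seq rcons w a | w <- W, a <- enum (alph n)] =
  (count (Pkm k m) W * count QB (enum (alph n)))%N.
Proof.
elim: W => [|w W IH] //= /andP[/eqP sw sW].
rewrite count_cat IH // count_map mulnDl; congr (_ + _)%N.
rewrite (@eq_count _ _ (fun a => Pkm k m w && QB a)); last by move=> a /=; rewrite Pkm_rcons.
case: (Pkm k m w) => /=; first by rewrite mul1n.
by rewrite mul0n; elim: (enum _) => //=.
Qed.

Lemma count_Pkm k m : count (Pkm k m) (words (k + m)) =
  ((5 * n - 6) ^ k * (count QB (enum (alph n))) ^ m)%N.
Proof.
elim: m => [|m IH].
  rewrite addn0 expn0 muln1 -size_words -count_predT.
  by apply: eq_count => w; rewrite /Pkm.
rewrite addnS /= count_step ?IH; last exact: words_size.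
by rewrite expnS; ring.
Qed.

Lemma cQ_lt : (count QB (enum (alph n)) < 5 * n - 6)%N.
Proof.
have := count_predC QB (enum (alph n)); rewrite size_enum_ord.
have : (0 < count (predC QB) (enum (alph n)))%N.
  rewrite -has_count; apply/hasP; exists ord_max; first by rewrite mem_enum.
  rewrite /= /QB /=; lia.
lia.
Qed.

Definition qq : R := (count QB (enum (alph n)))%:R / (5 * n - 6)%:R.

Lemma T_meas k m :
  measurable [set tau : wordspace n | Pkm k m (Defs.prefix tau (k + m))] /\
  nu [set tau : wordspace n | Pkm k m (Defs.prefix tau (k + m))] = (qq ^+ m)%:E.
Proof.
have [h1 h2] := pred_meas (k + m) (Pkm k m); split => //; rewrite h2 count_Pkm; congr EFin.
have NR : ((5 * n - 6)%:R : R) != 0 by rewrite pnatr_eq0; lia.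
rewrite natrM !natrX exprD /qq expr_div_n invfM.
by field; rewrite ?expf_neq0.
Qed.

Lemma qq_ge0 : 0 <= qq.
Proof. by rewrite /qq divr_ge0. Qed.

Lemma qq_lt1 : qq < 1.
Proof.
rewrite /qq ltr_pdivrMr ?mul1r ?ltr_nat; first exact: cQ_lt.
by rewrite ltr0n; lia.
Qed.

Lemma Ek_negl k : negligible nu [set tau : wordspace n | forall j, (k <= j)%N -> QB (tau j)].
Proof.
have mA : measurable (\bigcap_m [set tau : wordspace n | Pkm k m (Defs.prefix tau (k + m))]).
  by apply: bigcapT_measurable => m; exact: (T_meas k m).1.
exists (\bigcap_m [set tau : wordspace n | Pkm k m (Defs.prefix tau (k + m))]); split => //.
- change (nu (\bigcap_m [set tau : wordspace n | Pkm k m (Defs.prefix tau (k + m))]) = 0%E).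
  have le (m : nat) : (nu (\bigcap_m [set tau : wordspace n | Pkm k m (Defs.prefix tau (k + m))])
      <= (qq ^+ m)%:E)%E.
    rewrite -(T_meas k m).2; apply: le_measure; rewrite ?inE //; first exact: (T_meas k m).1.
    exact: bigcap_inf.
  have ge : (0 <= nu (\bigcap_m [set tau : wordspace n | Pkm k m (Defs.prefix tau (k + m))]))%E.
    exact: measure_ge0.
  move: le ge; case: (nu _) => [r| |] le ge.
  + suff -> : r = 0 by []; apply: le_anti; apply/andP; split; last by move: ge; rewrite lee_fin.
    have cv : (fun m => qq ^+ m) @ \oo --> 0 by apply: cvg_expr; rewrite ger0_norm ?qq_lt1 ?qq_ge0.
    rewrite -(cvg_lim _ cv) //; apply: limr_ge; first exact: cvgP cv.
    by apply: nearW => m; rewrite -lee_fin; exact: le m.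
  + by have := le 0%N; rewrite expr0.
  + by [].
- move=> tau /= hk m _; rewrite /Pkm; apply/allP => j; rewrite mem_iota => /andP[kj jkm].
  by rewrite /Defs.prefix nth_mkseq //; exact: hk.
Qed.

End Meas.

Theorem lemma5p3 (R : realType) (n : nat) (n_ge4 : (4 <= n)%N) (n_even : ~~ odd n)
  (nu : probability (wordspace n) R)
  (nu_cyl : forall w : seq (alph n),
     nu (cylinder w) = (((5 * n - 6)%:R : R) ^- size w)%:E) :
  exists N : set (wordspace n),
    measurable N /\ nu N = 0%E /\
    [set tau : wordspace n | ~ @injective_word R n tau] `<=` N.
Proof.
have := negligible_bigcup (fun k => @Ek_negl R n n_ge4 nu nu_cyl k).
case=> A [mA nA sub]; exists A; split => //; split => //.
move=> tau /= ninj; apply: sub.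
have [k hk] := noninj R n n_ge4 n_even tau ninj.
by exists k.
Qed.
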